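(* Let $m\geq 0$ and $k\geq 1$ be integers. If $\lambda$ is a partition with exactly $m$ $k$-hooks (i.e. $\alpha_k(\lambda)=m$), then \[ |\lambda|\geq t(m,k)= m\left(\left\lfloor \frac{m}{k}\right\rfloor +1\right)k-\binom{\lfloor m/k\rfloor +1}{2}k^2. \]
   Context: For a partition $\lambda=(\lambda_1\geq\cdots\geq\lambda_r>0)$, $|\lambda|=\sum_i\lambda_i$ is its weight. For a cell $u$ of the Young diagram of $\lambda$, the hook length of $u$ is the number of cells $v$ of the diagram with $v=u$, or $v$ below $u$ in the same column, or $v$ to the right of $u$ in the same row. $\alpha_k(\lambda)$ is the number of cells of the Young diagram of $\lambda$ with hook length exactly $k$ (the number of $k$-hooks). The number $t(m,k)$ is the weight of the partition with $m$ parts, writing $m=lk+r$ with $0\le r\le k-1$, consisting of $r$ parts equal to $(l+1)k$ followed by $k$ parts equal to $jk$ for each $j=l,l-1,\dots,1$. *)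

(* Defs.v *)
From mathcomp Require Import all_boot.
Set Implicit Arguments. Unset Strict Implicit. Unset Printing Implicit Defensive.

Definition is_partition (la : seq nat) : bool :=
  sorted geq la && all (fun x => 0 < x) la.

Definition weight (la : seq nat) : nat := sumn la.

(* Cells of the Young diagram: (i, j) with i < size la and j < nth 0 la i. *)
(* Hook length of cell (i,j): the cell itself, the cells to its right in row i,
   and the cells below it in column j. *)
Definition hook (la : seq nat) (i j : nat) : nat :=
  1 + (nth 0 la i - j.+1)
    + \sum_(i.+1 <= i' < size la) (j < nth 0 la i').

Definition alpha (k : nat) (la : seq nat) : nat :=
  \sum_(0 <= i < size la) \sum_(0 <= j < nth 0 la i) (hook la i j == k).

(* The extremal partition with m parts: m = l k + r, 0 <= r < k;
   r parts (l+1)k followed by k parts jk for j = l, l-1, ..., 1. *)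
Definition t_partition (m k : nat) : seq nat :=
  nseq (m %% k) ((m %/ k).+1 * k)
  ++ flatten [seq nseq k (j * k) | j <- rev (iota 1 (m %/ k))].

Definition t (m k : nat) : nat := weight (t_partition m k).

(* Main.v *)
Require Import Defs.
From mathcomp Require Import all_boot zify.
Lemma C2 n : 'C(n, 2) * 2 = n * n.-1.
Proof. elim: n => [//|n IH]. rewrite binS bin1 mulnDl IH /=. case: n {IH} => //= n. lia. Qed.

Lemma exists_max (s : seq nat) : s != [::] ->
  exists2 x, x \in s & forall y, y \in s -> y <= x.
Proof.
elim: s => [//|a s IH] _.
case: (eqVneq s [::]) => [->|ns].
  by exists a; rewrite ?mem_head // => y; rewrite inE => /eqP ->.
have [x xs hx] := IH ns.
exists (maxn a x); first by rewrite /maxn; case: (ltnP a x) => h; rewrite inE ?xs ?eqxx ?orbT.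
move=> y; rewrite inE => /orP [/eqP ->|/hx]; lia.
Qed.

Definition mov1 (s : seq nat) (t : nat) : bool := (0 < t) && (t.-1 \notin s).

Lemma step3 s : uniq s ->
  'C(size s, 2) + 'C((count (mov1 s) s).+1, 2) <= sumn s.
Proof.
move: {2}(size s) (leqnn (size s)) => N; elim: N s => [|N IH] s.
  by case: s.
case: (eqVneq s [::]) => [->//|ns] Hsz us.
have [x xs hx] := exists_max s ns.
set s' := rem x s.
have ps := perm_to_rem xs.
have us' : uniq s' := rem_uniq x us.
have Hsum : sumn s = x + sumn s' by rewrite (perm_sumn ps).
have Hsize : size s = (size s').+1 by rewrite (perm_size ps).
have Hcnt : count (mov1 s) s <= (count (mov1 s') s').+1.
  rewrite (permP ps) /= -/s'.
  have : count (mov1 s) s' <= count (mov1 s') s'.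
    apply: sub_count => t; rewrite /mov1 => /andP [-> /=].
    by apply: contra; apply: mem_rem.
  by case: (mov1 s x); rewrite /=; lia.
have Hx : size s + count (mov1 s) s <= x.+1.
  have -> : size s + count (mov1 s) s = size (s ++ map predn (filter (mov1 s) s)).
    by rewrite size_cat size_map size_filter.
  rewrite -(size_iota 0 x.+1); apply: uniq_leq_size.
    rewrite cat_uniq us /=; apply/andP; split.
      apply/hasPn => y /mapP [t]; rewrite mem_filter /mov1 => /andP [/andP [_ h] _] ->.
      exact: h.
    rewrite map_inj_in_uniq ?filter_uniq // => a b.
    rewrite !mem_filter /mov1 => /andP [/andP [a0 _] _] /andP [/andP [b0 _] _] /=; lia.
  move=> y; rewrite mem_cat mem_iota => /orP [/hx|/mapP [t]]; first lia.
  rewrite mem_filter => /andP [_ /hx] h ->; lia.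
have IH' := IH s' ltac:(lia) us'.
have hb := leq_bin2l 2 Hcnt.
move: IH' hb Hx; rewrite Hsum Hsize !binS !bin1.
set M := count _ s. set M2 := count _ s'. move=> *. lia.
Qed.
Definition runner (k : nat) (B : seq nat) (c : nat) := [seq b %/ k | b <- B & b %% k == c].

Lemma part k (F : nat -> nat) (B : seq nat) : 0 < k ->
  \sum_(b <- B) F b = \sum_(c < k) \sum_(b <- B | b %% k == c) F b.
Proof.
move=> k0.
rewrite (eq_bigr (fun c : 'I_k => \sum_(b <- B) (if b %% k == c then F b else 0))); last first.
  by move=> c _; rewrite big_mkcond.
rewrite exchange_big /=; apply: eq_bigr => b _.
rewrite -big_mkcond /= (big_pred1 (Ordinal (ltn_pmod b k0))) // => c /=.
Qed.

Lemma split_size k B : 0 < k -> size B = \sum_(c < k) size (runner k B c).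
Proof.
move=> k0; rewrite -sum1_size (part k (fun _ => 1) B k0); apply: eq_bigr => c _.
by rewrite size_map size_filter -sum1_count.
Qed.

Lemma split_sum k B : 0 < k ->
  sumn B = \sum_(c < k) (c * size (runner k B c) + k * sumn (runner k B c)).
Proof.
move=> k0; rewrite sumnE (part k id B k0); apply: eq_bigr => c _.
rewrite size_map size_filter -sum1_count sumnE big_map big_filter.
rewrite big_distrr big_distrr /= -big_split /=; apply: eq_bigr => b /eqP hb.
rewrite {1}(divn_eq b k) hb; lia.
Qed.
Definition mov (k : nat) (B : seq nat) (b : nat) : bool := (k <= b) && (b - k \notin B).

Lemma split_count k B : 0 < k ->
  count (mov k B) B <= \sum_(c < k) count (mov1 (runner k B c)) (runner k B c).
Proof.
move=> k0; rewrite -sumn_count sumnE big_map (part k _ B k0).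
apply: leq_sum => c _.
rewrite count_map -sumn_count sumnE big_map big_filter.
apply: leq_sum => b /eqP hb /=.
case hm: (mov k B b) => //=.
move: hm; rewrite /mov /mov1 /= => /andP [kb nb].
have -> /= : 0 < b %/ k by rewrite divn_gt0.
case: (boolP ((b %/ k).-1 \in runner k B c)) => // /mapP [b'].
rewrite mem_filter => /andP [/eqP hb' b'B] e.
have : b' = b - k.
  rewrite (divn_eq b' k) (divn_eq b k) hb hb' -e.
  have : 0 < b %/ k by rewrite divn_gt0.
  move: (b %/ k) => q; case: q => // q _ /=. rewrite mulSn; lia.
by move=> E; move: nb; rewrite -E b'B.
Qed.

Lemma uniq_S k B c : uniq B -> uniq (runner k B c).
Proof.
move=> uB; rewrite map_inj_in_uniq ?filter_uniq // => a b.
rewrite !mem_filter => /andP [/eqP ha _] /andP [/eqP hb _] e.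
by rewrite (divn_eq a k) (divn_eq b k) ha hb e.
Qed.
Lemma sumn_iota0 n : sumn (iota 0 n) = 'C(n, 2).
Proof. by rewrite sumnE -bin2_sum /index_iota subn0. Qed.

Lemma core k (g : nat -> nat) : 0 < k ->
  'C(\sum_(c < k) g c, 2) <= \sum_(c < k) (c * g c + k * 'C(g c, 2)).
Proof.
move=> k0.
set X := k * (\sum_(c < k) g c).+1.
set P := [seq x <- iota 0 X | x %/ k < g (x %% k)].
have uP : uniq P by rewrite filter_uniq // iota_uniq.
have hS : forall c : 'I_k, perm_eq (runner k P c) (iota 0 (g c)).
  move=> c; apply: uniq_perm; rewrite ?iota_uniq ?uniq_S // => t.
  rewrite mem_iota /=; apply/idP/idP.
    case/mapP => x; rewrite mem_filter mem_filter => /andP [/eqP hc /andP [hx _]] ->.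
    by rewrite -hc.
  move=> ht; apply/mapP; exists (t * k + c).
    rewrite mem_filter mem_filter divnMDl // modnMDl (modn_small (ltn_ord c)).
    rewrite (divn_small (ltn_ord c)) addn0 eqxx ht /= mem_iota /= /X.
    have : g c <= \sum_(c0 < k) g c0 by rewrite (bigD1 c) //=; apply: leq_addr.
    have := ltn_ord c. nia.
  by rewrite divnMDl // (divn_small (ltn_ord c)) addn0.
have := step3 P uP.
rewrite (split_size k P k0) (split_sum k P k0).
have E1 : \sum_(c < k) size (runner k P c) = \sum_(c < k) g c.
  by apply: eq_bigr => c _; rewrite (perm_size (hS c)) size_iota.
have E2 : \sum_(c < k) (c * size (runner k P c) + k * sumn (runner k P c)) = \sum_(c < k) (c * g c + k * 'C(g c, 2)).
  by apply: eq_bigr => c _; rewrite (perm_size (hS c)) (perm_sumn (hS c)) size_iota sumn_iota0.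
rewrite E1 E2.
move=> h; apply: leq_trans h; apply: leq_addr.
Qed.
Lemma tangent a L : L.+1 * a <= 'C(a.+1, 2) + 'C(L.+1, 2).
Proof.
have h1 := C2 a.+1. have h2 := C2 L.+1. simpl in h1, h2.
move: h1 h2; set X := 'C(a.+1, 2); set Y := 'C(L.+1, 2) => h1 h2.
case: (leqP a L) => h.
- have [d E] : exists d, L = a + d by exists (L - a); lia.
  subst L. nia.
- have [d E] : exists d, a = L.+1 + d by exists (a - L.+1); lia.
  subst a. nia.
Qed.
Definition beta (la : seq nat) i := nth 0 la i + (size la - i.+1).
Definition Bof (la : seq nat) := [seq beta la i | i <- iota 0 (size la)].

Lemma mono la i i' : sorted geq la -> i <= i' -> i' < size la -> nth 0 la i' <= nth 0 la i.
Proof.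
move=> sl ii' i'n.
have tr : transitive geq by move=> a b c h1 h2; apply: leq_trans h2 h1.
apply: (sorted_leq_nth tr leqnn 0 sl) => //; rewrite inE; lia.
Qed.

Arguments mono [la i i'].

Lemma beta_lt la i i' : sorted geq la -> i < i' -> i' < size la -> beta la i' < beta la i.
Proof. move=> sl ii' i'n; have := mono sl (ltnW ii') i'n; rewrite /beta; lia. Qed.

Arguments beta_lt [la i i'].

Lemma uniq_B la : sorted geq la -> uniq (Bof la).
Proof.
move=> sl; rewrite map_inj_in_uniq ?iota_uniq // => a b; rewrite !mem_iota /= => ha hb e.
case: (ltngtP a b) => // h.
- by have := beta_lt sl h hb; rewrite e ltnn.
- by have := beta_lt sl h ha; rewrite e ltnn.
Qed.

Lemma sumn_nth (s : seq nat) : sumn s = \sum_(i <- iota 0 (size s)) nth 0 s i.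
Proof.
elim: s => [|a s IH]; first by rewrite big_nil.
by rewrite /= big_cons /= -add1n iotaDl big_map IH.
Qed.

Lemma sum_B la : sumn (Bof la) = sumn la + 'C(size la, 2).
Proof.
rewrite sumnE big_map big_split /= sumn_nth; congr (_ + _).
rewrite -bin2_sum big_nat_rev /index_iota subn0; apply: eq_bigr => i _; lia.
Qed.

Lemma sum_range_all (P : pred nat) a b : (forall x, a <= x < b -> P x) ->
  \sum_(a <= x < b) (P x : nat) = b - a.
Proof.
move=> H; rewrite -[b - a]muln1 -sum_nat_const_nat; apply: eq_big_nat => x hx.
by rewrite H.
Qed.

Lemma sum_range_none (P : pred nat) a b : (forall x, a <= x < b -> ~~ P x) ->
  \sum_(a <= x < b) (P x : nat) = 0.
Proof.
move=> H; rewrite (eq_big_nat _ _ (F2 := fun _ => 0)); first by rewrite big1.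
by move=> x hx; rewrite (negbTE (H x hx)).
Qed.

Lemma sum_range_le (P : pred nat) a b : \sum_(a <= x < b) (P x : nat) <= b - a.
Proof.
rewrite -[b - a]muln1 -sum_nat_const_nat; apply: leq_sum => x _; exact: leq_b1.
Qed.

Lemma hook_mov la k i j : sorted geq la -> 0 < k -> i < size la -> j < nth 0 la i ->
  hook la i j = k -> mov k (Bof la) (beta la i).
Proof.
move=> sl k0 il jl; rewrite /hook.
set n := size la.
set c := \sum_(i.+1 <= i' < n) _ => hk.
have cle : c <= n - i.+1 by apply: (sum_range_le (fun x => j < nth 0 la x)).
apply/andP; split; first by rewrite /beta; lia.
apply/negP => /mapP [i']; rewrite mem_iota /= => hi' E.
case: (leqP i' i) => hii.
  have : beta la i <= beta la i'.
    case: (ltngtP i' i) hii => // h _; [exact: ltnW (beta_lt sl h il)| by rewrite h].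
  rewrite /beta in E *; lia.
case: (ltnP j (nth 0 la i')) => hj.
- have : i' - i <= c.
    rewrite /c (big_cat_nat _ (n := i'.+1)) //=; last by lia.
    rewrite (sum_range_all (fun x => j < nth 0 la x)); first by lia.
    move=> x /andP [h1 h2]; have := mono sl (_ : x <= i') hi'; lia.
  rewrite /beta in E; lia.
- have : c <= i' - i.+1.
    rewrite /c (big_cat_nat _ (n := i')) //=; last by lia.
    rewrite (sum_range_none (fun x => j < nth 0 la x) i' n); last first.
      move=> x /andP [h1 h2]; have := mono sl h1 h2; rewrite -leqNgt; lia.
    rewrite addn0; exact: (sum_range_le (fun x => j < nth 0 la x)).
  rewrite /beta in E; lia.
Qed.

Lemma sum_eq_le1 (f : nat -> nat) k L : (forall j j', j < j' -> j' < L -> f j' < f j) ->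
  \sum_(0 <= j < L) (f j == k) <= 1.
Proof.
elim: L => [|L IH] H; first by rewrite big_geq.
rewrite big_nat_recr //=.
case: (eqVneq (f L) k) => e.
  rewrite (sum_range_none (fun j => f j == k)) // => x /andP [_ hx].
  by have := H x L hx (ltnSn L); rewrite e => h; apply/eqP => e'; rewrite e' ltnn in h.
rewrite addn0; apply: IH => j j' h1 h2; apply: H => //; exact: ltnW.
Qed.

Lemma row_le la k i : sorted geq la -> 0 < k -> i < size la ->
  \sum_(0 <= j < nth 0 la i) (hook la i j == k) <= mov k (Bof la) (beta la i).
Proof.
move=> sl k0 il.
case hm: (mov k (Bof la) (beta la i)).
  apply: sum_eq_le1 => j j' jj' j'l; rewrite /hook.
  have : \sum_(i.+1 <= i' < size la) (j' < nth 0 la i') <= \sum_(i.+1 <= i' < size la) (j < nth 0 la i').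
    apply: leq_sum => x _; case: (ltnP j' (nth 0 la x)) => // h.
    by rewrite (ltn_trans jj' h).
  lia.
rewrite leqn0; apply/eqP; apply: sum_range_none => j /andP [_ jl].
apply/negP => /eqP hk; by rewrite (hook_mov la k i j sl k0 il jl hk) in hm.
Qed.

Lemma alpha_le la k : sorted geq la -> 0 < k -> alpha k la <= count (mov k (Bof la)) (Bof la).
Proof.
move=> sl k0; rewrite /alpha -sumn_count sumnE big_map.
rewrite {2}/Bof big_map.
apply: (@leq_trans (\sum_(0 <= i < size la) mov k (Bof la) (beta la i))); last first.
  by rewrite /index_iota subn0.
rewrite big_nat_cond [X in _ <= X]big_nat_cond.
apply: leq_sum => i /andP [/andP [_ il] _]; exact: row_le.
Qed.
Lemma sumn_map_mul (f : nat -> nat) a s : sumn (map (fun x => a * f x) s) = a * sumn (map f s).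
Proof. by elim: s => [|x s IH] /=; rewrite ?muln0 // IH mulnDr. Qed.

Lemma t_formula m k : 0 < k -> t m k = m * (m %/ k).+1 * k - 'C((m %/ k).+1, 2) * k ^ 2.
Proof.
move=> k0; rewrite /t /weight /t_partition sumn_cat.
rewrite sumn_nseq sumn_flatten -map_comp.
rewrite (eq_map (g := fun j => k * (j * k))); last by move=> j /=; rewrite sumn_nseq mulnC.
rewrite map_rev sumn_rev sumn_map_mul.
rewrite (eq_map (g := fun j => k * j)); last by move=> j; rewrite mulnC.
rewrite sumn_map_mul map_id.
have -> : sumn (iota 1 (m %/ k)) = 'C((m %/ k).+1, 2) by rewrite -sumn_iota0.
have h := C2 (m %/ k).+1; simpl in h.
have hm := divn_eq m k.
move: h hm; set l := m %/ k; set r := m %% k; set X := 'C(l.+1, 2) => h hm.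
rewrite hm; clearbody l r X.
have E : (l * k + r) * l.+1 * k = l.+1 * k * r + X * k ^ 2 * 2 by nia.
rewrite E; nia.
Qed.

Lemma convex k (f : 'I_k -> nat) L :
  L.+1 * \sum_(c < k) f c <= \sum_(c < k) 'C((f c).+1, 2) + k * 'C(L.+1, 2).
Proof.
rewrite big_distrr /=.
have -> : k * 'C(L.+1, 2) = \sum_(c < k) 'C(L.+1, 2) by rewrite sum_nat_const card_ord.
rewrite -big_split; apply: leq_sum => c _; exact: tangent.
Qed.

Lemma B_bound k B : 0 < k -> uniq B ->
  k * \sum_(c < k) 'C((count (mov1 (runner k B c)) (runner k B c)).+1, 2) + 'C(size B, 2) <= sumn B.
Proof.
move=> k0 uB.
rewrite (split_sum k B k0) (split_size k B k0).
set n := fun c : nat => size (runner k B c).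
have Hc := core k n k0.
apply: (@leq_trans (\sum_(c < k) (c * n c + k * 'C(n c, 2)) +
   k * \sum_(c < k) 'C((count (mov1 (runner k B c)) (runner k B c)).+1, 2))).
  by rewrite addnC leq_add2r.
rewrite big_distrr -big_split /=; apply: leq_sum => c _.
by have := step3 (runner k B c) (uniq_S k B c uB); rewrite /n => h; rewrite -addnA leq_add2l -mulnDr leq_mul2l h orbT.
Qed.

Theorem theorem3p1 (m k : nat) (la : seq nat) :
  0 < k -> is_partition la -> alpha k la = m ->
  t m k <= weight la /\
  t m k = m * (m %/ k).+1 * k - 'C((m %/ k).+1, 2) * k ^ 2.
Proof.
move=> k0 /andP [sl _] hm.
split; last exact: t_formula.
rewrite t_formula //.
have uB := uniq_B la sl.
have hs := sum_B la.
have hsz : size (Bof la) = size la by rewrite size_map size_iota.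
have hal := alpha_le la k sl k0.
have hc := split_count k (Bof la) k0.
have hb := B_bound k (Bof la) k0 uB.
set L := m %/ k.
have hv := convex k (fun c : 'I_k => count (mov1 (runner k (Bof la) c)) (runner k (Bof la) c)) L.
move: hs hsz hal hc hb hv; rewrite hm /weight.
set Q := \sum_(c < k) 'C(_.+1, 2).
set M := \sum_(c < k) count _ _.
set X := 'C(L.+1, 2).
move=> hs hsz hal hc hb hv.
have h1 : L.+1 * m <= Q + k * X by apply: leq_trans hv; rewrite leq_mul2l (leq_trans hal hc) orbT.
have h2 : k * (L.+1 * m) <= k * Q + k * (k * X) by rewrite -mulnDr leq_mul2l h1 orbT.
rewrite hsz hs in hb.
have : m * L.+1 * k = k * (L.+1 * m) by rewrite mulnC [L.+1 * m]mulnC mulnA.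
have : X * k ^ 2 = k * (k * X) by rewrite mulnA mulnC -[k * k]/(k ^ 2).
lia.
Qed.
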